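(* Let $B\subseteq\mathbb{R}^n$ be a bounded set and let $V_0,V_1,\dots$ be nonempty finite subsets of $B$. Suppose there are $C^\star>0$ and $r_0>0$ such that for every $k\geq1$ and every $v_k\in V_k$ there exists $v_{k-1}\in V_{k-1}$ with $|v_{k-1}-v_k|<C^\star2^{-k}r_0$. Then $V_k$ converges in the Hausdorff metric to a compact set $V\subseteq\overline{B}$. *)

(* Defs.v *)
From HB Require Import structures.
From mathcomp Require Import all_boot all_order all_algebra.
From mathcomp Require Import all_classical all_reals all_analysis.
Set Implicit Arguments. Unset Strict Implicit. Unset Printing Implicit Defensive.
Import Order.TTheory GRing.Theory Num.Theory.
Import numFieldNormedType.Exports.
Local Open Scope classical_set_scope.
Local Open Scope ring_scope.

Definition eucl_dist (R : realType) (n : nat) (x y : 'rV[R]_n) : R :=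
  Num.sqrt (\sum_(i < n) (x ord0 i - y ord0 i) ^+ 2).

(* distance from a point to a set (extended real, +oo for the empty set) *)
Definition pt_set_dist (R : realType) (n : nat) (x : 'rV[R]_n) (A : set 'rV[R]_n)
  : \bar R := ereal_inf [set (eucl_dist x a)%:E | a in A].

Definition hausdorff_dist (R : realType) (n : nat) (A B : set 'rV[R]_n) : \bar R :=
  maxe (ereal_sup [set pt_set_dist a B | a in A])
       (ereal_sup [set pt_set_dist b A | b in B]).

(* Main.v *)
Require Import Defs.
From HB Require Import structures.
From mathcomp Require Import all_boot all_order all_algebra.
From mathcomp Require Import all_classical all_reals all_analysis.
From mathcomp Require Import ring lra zify.
Import Order.TTheory GRing.Theory Num.Theory.
Import numFieldNormedType.Exports.
Local Open Scope classical_set_scope.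
Local Open Scope ring_scope.

Section S.
Variables (R : realType) (n : nat).
Implicit Types x y : 'rV[R]_n.

Lemma entry_le_norm (x : 'rV[R]_n) i : `|x ord0 i| <= `|x|.
Proof.
rewrite [leRHS]/Num.Def.normr /= mx_normrE.
exact: (@le_bigmax _ R _ 0 (fun ij => `|x ij.1 ij.2|) (ord0, i)).
Qed.

Lemma norm_le_eucl x y : `|x - y| <= eucl_dist x y.
Proof.
rewrite [leLHS]/Num.Def.normr /= mx_normrE; apply: bigmax_le; first exact: sqrtr_ge0.
move=> [i j] _ /=; rewrite (ord1 i) mxE -sqrtr_sqr ler_sqrt; last first.
  by apply: sumr_ge0 => k _; exact: sqr_ge0.
rewrite (bigD1 j) //= !mxE lerDl; apply: sumr_ge0 => k _; exact: sqr_ge0.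
Qed.

Lemma eucl_le_norm x y : eucl_dist x y <= n%:R * `|x - y|.
Proof.
have h0 : 0 <= n%:R * `|x - y| by rewrite mulr_ge0.
rewrite /eucl_dist -(ger0_norm h0) -sqrtr_sqr ler_sqrt ?sqr_ge0 //.
apply: (@le_trans _ _ (\sum_(i < n) `|x - y| ^+ 2)).
  apply: ler_sum => i _; have := entry_le_norm (x - y) i; rewrite !mxE.
  rewrite -(ler_sqr (normr_ge0 _) (normr_ge0 _)) => /(le_trans _); apply.
  by rewrite real_normK // num_real.
rewrite sumr_const card_ord -(mulr_natl (`|x - y| ^+ 2) n) exprMn; apply: ler_wpM2r; first exact: sqr_ge0.
by rewrite -natrX ler_nat; nia.
Qed.

Lemma eucl_ge0 x y : 0 <= eucl_dist x y.
Proof. exact: sqrtr_ge0. Qed.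

Lemma eucl_le_norm1 x y : eucl_dist x y <= (n%:R + 1) * `|x - y|.
Proof.
apply: le_trans (eucl_le_norm x y) _; apply: ler_wpM2r => //; lra.
Qed.

Lemma chain (V : nat -> set 'rV[R]_n) (c : R) : 0 < c ->
  (forall k vk, V k.+1 vk -> exists y, V k y /\ `|y - vk| <= c * 2^-(k.+1)) ->
  forall k d x, V (k + d)%N x -> exists y, V k y /\ `|y - x| <= c * (2^-k - 2^-(k + d)).
Proof.
move=> c0 Hs k d; elim: d => [|d IH] x.
  by rewrite addn0 => Vx; exists x; split => //; rewrite subrr normr0 subrr mulr0.
rewrite addnS => /Hs [x' [Vx' hx']].
have [y [Vy hy]] := IH x' Vx'.
exists y; split => //.
apply: le_trans (ler_distD x' _ _) _.
apply: le_trans (lerD hy hx') _.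
rewrite !exprS !invfM.
set b := (2 ^+ (k + d))^-1; set a := (2 ^+ k)^-1.
rewrite !mulrBr; lra.
Qed.

Lemma geo_small (c eta : R) : 0 < eta -> \forall k \near \oo, c * 2^-k <= eta.
Proof.
move=> eta0.
have /cvgrPdist_le /(_ eta eta0) : geometric c (2^-1 : R) @ \oo --> 0.
  apply: cvg_geometric; rewrite ger0_norm ?invr_ge0 // invf_lt1 //; lra.
apply: filterS => k /=; rewrite sub0r normrN exprVn => /(le_trans (ler_norm _)).
by [].
Qed.

Lemma fine_bound (x : \bar R) (eps : R) : (0 <= x)%E -> (x <= eps%:E)%E ->
  `|0 - fine x| <= eps.
Proof.
case: x => [r| |] //= r0 reps; rewrite sub0r normrN ger0_norm //.
Qed.

End S.
Arguments norm_le_eucl {R n}.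
Arguments eucl_le_norm1 {R n}.
Arguments eucl_ge0 {R n}.
Arguments chain {R n V c}.
Arguments geo_small {R}.
Arguments fine_bound {R}.

Theorem lemma8p2 (R : realType) (n : nat) (B : set 'rV[R]_n)
  (V : nat -> set 'rV[R]_n) (Cstar r0 : R) :
  bounded_set B ->
  (forall k, finite_set (V k)) ->
  (forall k, V k !=set0) ->
  (forall k, V k `<=` B) ->
  0 < Cstar -> 0 < r0 ->
  (forall k : nat, (0 < k)%N -> forall vk, V k vk ->
     exists vk1, V k.-1 vk1 /\ eucl_dist vk1 vk < Cstar * (2 ^- k) * r0) ->
  exists W : set 'rV[R]_n,
    compact W /\ W `<=` closure B /\
    (fun k => hausdorff_dist (V k) W) @ \oo --> 0%E.
Proof.
move=> hB _ Vne VB C0 r00 Hs.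
set c := Cstar * r0.
have c0 : 0 < c by rewrite mulr_gt0.
set N1 := (n%:R + 1 : R).
have N10 : 0 < N1 by rewrite /N1; apply: ltr_wpDl => //.
have Hs' : forall k vk, V k.+1 vk -> exists y, V k y /\ `|y - vk| <= c * 2^-(k.+1).
  move=> k vk /(Hs k.+1 isT) [y [Vy hy]]; exists y; split => //.
  apply: le_trans (norm_le_eucl y vk) _; apply: ltW; apply: (lt_le_trans hy).
  by rewrite /c mulrAC.
have ch : forall k j x, (k <= j)%N -> V j x -> exists y, V k y /\ `|y - x| <= c * 2^-k.
  move=> k j x kj; rewrite -(subnKC kj) => /(chain c0 Hs') [y [Vy hy]].
  exists y; split => //; apply: (le_trans hy); rewrite ler_pM2l // lerBlDr lerDl.
  by rewrite invr_ge0 exprn_ge0.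
pose A m := closure (\bigcup_(j in [set j | (m <= j)%N]) V j).
pose W := \bigcap_(m in [set: nat]) A m.
have Amono : forall i m, (i <= m)%N -> A m `<=` A i.
  move=> i m im; apply: closureS => x [j /= jm Vx]; exists j => //=.
  exact: leq_trans jm.
have AB : forall m, A m `<=` closure B.
  by move=> m; apply: closureS => x [j _ /VB].
set K := closure B.
have Kc : compact K.
  apply: bounded_closed_compact; last exact: closed_closure.
  move: hB => [M [Mreal HM]].
  exists (M + 2); split; first exact: num_real.
  move=> z Mz p Kp.
  have [y [By bpy]] := Kp (ball p 1) (nbhsx_ballx p 1 ltr01).
  have hM1 : M < M + 1 by rewrite ltrDl.
  have := HM (M + 1) hM1 y By; rewrite /= => hy.
  rewrite -ball_normE /ball_ /= in bpy.
  have := ler_normD y (p - y); rewrite addrC subrK => hp.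
  rewrite ltW //; apply: (le_lt_trans hp); apply: (lt_le_trans _ (ltW Mz)).
  move: hy bpy; lra.
have WK : W `<=` K by move=> p /(_ 0%N I); apply: AB.
have Wc : compact W.
  apply: subclosed_compact WK => //.
  by apply: closed_bigI => m _; exact: closed_closure.
have Vclose : forall e, 0 < e -> exists m, forall j, (m <= j)%N -> forall a, V j a ->
    exists w, W w /\ `|a - w| < e.
  move=> e e0.
  pose O := \bigcup_(w in W) ball w e.
  have Oop : open O by apply: bigcup_open => w _; exact: ball_open.
  apply: contrapT => Hn.
  have Fne : forall m, (K `&` (A m `&` ~` O)) !=set0.
    move=> m; apply: contrapT => Fm0; apply: Hn; exists m => j jm a Va.
    apply: contrapT => nw; apply: Fm0; exists a; split.
      by apply: subset_closure; exact: VB Va.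
    split; first by apply: subset_closure; exists j.
    move=> [w Ww bwa]; apply: nw; exists w; split => //.
    by rewrite -ball_normE /ball_ /= distrC in bwa.
  move: Kc; rewrite compact_In0 => /(_ nat setT (fun m => K `&` (A m `&` ~` O))).
  case.
  - exists (fun m => A m `&` ~` O) => m _ //.
    by apply: closedI; [exact: closed_closure | exact: open_closedC].
  - move=> D' _; set M := (\max_(i <- finmap.enum_fset D') i)%N.
    have [p [Kp [AMp Op]]] := Fne M.
    exists p => i iD'; split => //; split => //.
    apply: (Amono i M _ p AMp).
    exact: (@leq_bigmax_seq _ (finmap.enum_fset D') xpredT id i iD' isT).
  move=> p Hp.
  have Wp : W p by move=> m _; have [_ []] := Hp m I.
  have [_ [_ nOp]] := Hp 0%N I.
  by apply: nOp; exists p => //; exact: ballxx.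
have Wclose : forall e, 0 < e -> \forall k \near \oo, forall w, W w ->
    exists a, V k a /\ eucl_dist w a <= e.
  move=> e e0.
  have eta0 : 0 < e / (2 * N1) by rewrite divr_gt0 // mulr_gt0.
  have G := geo_small c _ eta0.  move: G; apply: filterS => k hk w Ww.
  have [x [[j /= jk Vjx] bwx]] := Ww k I (ball w _) (nbhsx_ballx w _ eta0).
  rewrite -ball_normE /ball_ /= in bwx.
  have [y [Vy hy]] := ch k j x jk Vjx.
  exists y; split => //.
  apply: le_trans (eucl_le_norm1 w y) _.
  have : `|w - y| <= e / (2 * N1) + e / (2 * N1).
    apply: le_trans (ler_distD x _ _) _; rewrite distrC in hy.
    by apply: lerD; [exact: ltW | exact: le_trans hy hk].
  rewrite -(ler_pM2l N10) => /le_trans; apply.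
  rewrite le_eqVlt; apply/orP; left; apply/eqP; field; exact: lt0r_neq0.
have Hb : forall eps, 0 < eps -> \forall k \near \oo,
    (0 <= hausdorff_dist (V k) W)%E /\ (hausdorff_dist (V k) W <= eps%:E)%E.
  move=> eps eps0.
  have [m Hm] := Vclose (eps / N1) (divr_gt0 eps0 N10).
  apply: filterS2 (Wclose eps eps0) (nbhs_infty_ge m) => k Wk km.
  split.
    have [a Va] := Vne k.
    rewrite /hausdorff_dist le_max; apply/orP; left.
    apply: ereal_sup_ge; exists (pt_set_dist a W); first by exists a.
    apply: le_ereal_inf_tmp => _ [w _ <-]; rewrite lee_fin; exact: eucl_ge0.
  rewrite /hausdorff_dist ge_max; apply/andP; split; apply: ge_ereal_sup.
  - move=> _ [a Va <-]; apply: ereal_inf_le.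
    have [w [Ww hw]] := Hm k km a Va.
    exists (eucl_dist a w)%:E; first by exists w.
    rewrite lee_fin; apply: le_trans (eucl_le_norm1 a w) _.
    rewrite -(ltr_pM2l N10) in hw.
    by apply: le_trans (ltW hw) _; rewrite mulrC divfK // lt0r_neq0.
  - move=> _ [w Ww <-]; apply: ereal_inf_le.
    have [a [Va ha]] := Wk w Ww.
    by exists (eucl_dist w a)%:E; [exists a | rewrite lee_fin].
exists W; split => //; split; first by move=> p /WK.
apply/fine_cvgP; split.
  apply: filterS (Hb 1 ltr01) => k [h0 h1].
  by rewrite ge0_fin_numE // (le_lt_trans h1) // ltry.
apply/cvgrPdist_le => eps eps0.
apply: filterS (Hb eps eps0) => k [h0 h1] /=.
exact: fine_bound.
Qed.
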